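(* (Ważewski property) Let $\varphi$ be a random homeomorphism and $S$ a random isolated invariant set for $\varphi$ whose random Conley index is nontrivial, i.e. $h(S,\varphi)\neq\underline 0$. If $\theta$ is ergodic with respect to $\mathbb P$, then $S(\omega)\neq\emptyset$ almost surely.
   Context: Let $(\Omega,\mathscr F,\mathbb P)$ be a probability space and $\theta:\Omega\to\Omega$ an invertible bimeasurable map preserving $\mathbb P$; $\theta_n=\theta^n$. Let $(X,d_X)$ be a locally compact separable complete metric space. A random homeomorphism is $\varphi:\Omega\times X\to X$ with $\varphi(\cdot,x)$ measurable and $\varphi(\omega,\cdot)$ a homeomorphism; iterates $\varphi^n(\omega,\cdot)=\varphi(\theta_{n-1}\omega,\cdot)\circ\cdots\circ\varphi(\omega,\cdot)$ ($n>0$), $\varphi^0=\mathrm{id}$, $\varphi^n(\omega,\cdot)=\varphi(\theta_n\omega,\cdot)^{-1}\circ\cdots\circ\varphi(\theta_{-1}\omega,\cdot)^{-1}$ ($n<0$). Random compact set: compact-valued $D$ with $\omega\mapsto\mathrm{dist}_X(x,D(\omega))$ measurable for each $x$. $\mathrm{Inv}A(\omega)=\{x\in A(\omega):\varphi^n(\omega,x)\in A(\theta_n\omega)\ \forall n\in\mathbb Z\}$. A random compact $N$ is a random isolating neighborhood if $\mathrm{Inv}N\subset\mathrm{int}N$; $S=\mathrm{Inv}N$ is then a random isolated invariant set. Exit set $N^-(\omega)=\{x\in N(\omega):\varphi(\omega,x)\notin\mathrm{int}N(\theta\omega)\}$. A random neighborhood of $A$ in $N$: random $W\subset N$ with $A(\omega)$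 in the relative interior of $W(\omega)$. A random filtration pair for $S$ is $(N,L)$ with $N$ a random isolating neighborhood, $S=\mathrm{Inv}N$, $L\subset N$ random compact, $N=\mathrm{cl}\,\mathrm{int}N$, $L=\mathrm{cl}\,\mathrm{int}L$, $\mathrm{cl}(N\setminus L)$ a random isolating neighborhood with $\mathrm{Inv}\,\mathrm{cl}(N\setminus L)=S$, $L$ a random neighborhood of $N^-$ in $N$, and $\varphi(\omega,L(\omega))\cap\mathrm{cl}(N(\theta\omega)\setminus L(\theta\omega))=\emptyset$. For $P=(N,L)$: $N_L(\omega)=N(\omega)/L(\omega)$ with base point $[L(\omega)]$ (an added isolated base point if $L(\omega)=\emptyset$; $\emptyset/\emptyset$ is the one-point space), $p$ the quotient map, and $\varphi_P(\omega,x)=[L(\theta\omega)]$ if $x=[L(\omega)]$ or $\varphi(\omega,x)\notin N(\theta\omega)$, else $p(\theta\omega,\varphi(\omega,x))$. Random maps between random pointed spaces are base-point preserving, continuous in the space variable, measurable in $\omega$; random homotopy: a map $H(t,\omega,x)$ continuous in $(t,x)$, measurable in $\omega$, joining two such maps. For random pointed spaces $C,D$ with self-maps $c(\omega,\cdot):C(\omega)\to C(\theta\omega)$, $d$, iterates $c^k(\omega,\cdot)=c(\theta_{k-1}\omega,\cdot)\circ\cdots\circ c(\omega,\cdot)$, the classes $[C,c]$, $[D,d]$ are random shift equivalent if there are measurable $n_1,n_2\ge0$ and random maps $r(\omega,\cdot):C(\omega)\to D(\theta_{n_1(\omega)}\omega)$, $s(\omega,\cdot):D(\omega)\to C(\theta_{n_2(\omega)}\omega)$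 with, up to random homotopy: $r(\theta\omega,c(\omega,\cdot))\simeq d^{n_1(\theta\omega)-n_1(\omega)}(\theta_{n_1(\omega)+1}\omega,d(\theta_{n_1(\omega)}\omega,r(\omega,\cdot)))$ if $n_1(\theta\omega)\ge n_1(\omega)$ and $d^{n_1(\omega)-n_1(\theta\omega)}(\theta_{n_1(\theta\omega)+1}\omega,r(\theta\omega,c(\omega,\cdot)))\simeq d(\theta_{n_1(\omega)}\omega,r(\omega,\cdot))$ otherwise; the same for $(s,d,c,n_2)$; $r(\theta_{n_2(\omega)}\omega,s(\omega,\cdot))\simeq d^{n_2(\omega)+n_1(\theta_{n_2(\omega)}\omega)}(\omega,\cdot)$ and $s(\theta_{n_1(\omega)}\omega,r(\omega,\cdot))\simeq c^{n_1(\omega)+n_2(\theta_{n_1(\omega)}\omega)}(\omega,\cdot)$. The random Conley index $h(S,\varphi)$ is the random shift equivalence class of the random homotopy class $[\varphi_P]$ on $N_L$ for a random filtration pair $P=(N,L)$ of $S$. $\underline 0$ denotes the random Conley index of random pointed spaces consisting of just one point (the base point) with the constant maps. *)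

(* Defs.v *)
From HB Require Import structures.
From mathcomp Require Import all_boot all_order all_algebra.
From mathcomp Require Import all_classical all_reals all_analysis measurable_realfun.
Set Implicit Arguments. Unset Strict Implicit. Unset Printing Implicit Defensive.
Import Order.TTheory GRing.Theory Num.Theory.
Import numFieldNormedType.Exports.
Local Open Scope classical_set_scope.
Local Open Scope ring_scope.

(* Points of the pointed quotient space N/L are encoded in option X:          *)
(*   None   = the base point [L] (an added isolated point if L is empty),     *)
(*   Some x = the class of x, for x in N \ L.                                 *)

Section Setting.
Context {R : realType} {d : measure_display} {Omega : measurableType d}.
Context {X : metricType R}.

Definition thetaN (theta : Omega -> Omega) (n : nat) (w : Omega) := iter n theta w.

Definition thetaZ (theta thetainv : Omega -> Omega) (n : int) (w : Omega) :=
  match n with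
  | Posz k => iter k theta w
  | Negz k => iter k.+1 thetainv w
  end.

Definition invertible_mp (P : probability Omega R) (theta thetainv : Omega -> Omega) :=
  [/\ cancel theta thetainv, cancel thetainv theta,
      measurable_fun setT theta, measurable_fun setT thetainv &
      forall A, measurable A -> P (theta @^-1` A) = P A].

Definition ergodic (P : probability Omega R) (theta : Omega -> Omega) :=
  forall A, measurable A -> theta @^-1` A = A -> P A = 0%E \/ P A = 1%E.

Definition complete_space (Y : metricType R) :=
  forall F : set_system Y, ProperFilter F -> cauchy F -> exists y : Y, F --> y.

Definition separable_space (Y : metricType R) :=
  exists D : set Y, countable D /\ dense D.

Definition random_homeo (phi psi : Omega -> X -> X) :=
  (forall x (U : set X), open U -> measurable [set w | U (phi w x)]) /\
  (forall w, [/\ cancel (phi w) (psi w), cancel (psi w) (phi w),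
                 continuous (phi w) & continuous (psi w)]).

Section Iterates.
Variables (theta thetainv : Omega -> Omega) (phi psi : Omega -> X -> X).

Fixpoint phiN (k : nat) (w : Omega) (x : X) : X :=
  match k with
  | 0 => x
  | k'.+1 => phi (iter k' theta w) (phiN k' w x)
  end.

Fixpoint phiB (k : nat) (w : Omega) (x : X) : X :=
  match k with
  | 0 => x
  | k'.+1 => psi (iter k'.+1 thetainv w) (phiB k' w x)
  end.

Definition phiZ (n : int) (w : Omega) (x : X) : X :=
  match n with
  | Posz k => phiN k w x
  | Negz k => phiB k.+1 w x
  end.

Definition Inv (A : Omega -> set X) (w : Omega) : set X :=
  [set x | A w x /\ forall n : int, A (thetaZ theta thetainv n w) (phiZ n w x)].

End Iterates.

Definition distX (x : X) (A : set X) : \bar R :=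
  ereal_inf [set (mdist x y)%:E | y in A].

Definition random_compact (D : Omega -> set X) :=
  (forall w, compact (D w)) /\
  (forall x, measurable_fun setT (fun w => distX x (D w))).

Section Isolation.
Variables (theta thetainv : Omega -> Omega) (phi psi : Omega -> X -> X).

Definition isolating_nbhd (N : Omega -> set X) :=
  random_compact N /\
  forall w, Inv theta thetainv phi psi N w `<=` interior (N w).

Definition isolated_invariant (S : Omega -> set X) :=
  exists N, isolating_nbhd N /\ forall w, S w = Inv theta thetainv phi psi N w.

Definition exit_set (N : Omega -> set X) (w : Omega) : set X :=
  [set x | N w x /\ ~ interior (N (theta w)) (phi w x)].

Definition rel_interior (W A : set X) : set X :=
  [set x | W x /\ exists U : set X, [/\ open U, U x & U `&` A `<=` W]].

Definition filtration_pair (S N L : Omega -> set X) :=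
  [/\ isolating_nbhd N,
      (forall w, S w = Inv theta thetainv phi psi N w),
      random_compact L,
      (forall w, L w `<=` N w) &
      (forall w, N w = closure (interior (N w)))] /\
  [/\ (forall w, L w = closure (interior (L w))),
      isolating_nbhd (fun w => closure (N w `\` L w)),
      (forall w, Inv theta thetainv phi psi (fun w => closure (N w `\` L w)) w = S w),
      (forall w, exit_set N w `<=` rel_interior (L w) (N w)) &
      (forall w, phi w @` L w `&` closure (N (theta w) `\` L (theta w)) = set0)].

End Isolation.

Definition Qs (N L : set X) : set (option X) :=
  [set q | q = None \/ exists x, [/\ q = Some x, N x & ~ L x]].

(* the quotient map N -> N/L (points outside N are also sent to the base point) *)
Definition qproj (N L : set X) (x : X) : option X :=
  if (x \in N) && (x \notin L) then Some x else None.

(* open sets of the quotient topology of N/L (N carrying the subspace topology) *)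
Definition qopen (N L : set X) (U : set (option X)) :=
  U `<=` Qs N L /\
  exists V : set X, open V /\ [set x | N x /\ U (qproj N L x)] = V `&` N.

Definition qcont (N1 L1 N2 L2 : set X) (f : option X -> option X) :=
  [/\ f None = None,
      (forall q, Qs N1 L1 q -> Qs N2 L2 (f q)) &
      (forall U, qopen N2 L2 U -> qopen N1 L1 (Qs N1 L1 `&` f @^-1` U))].

(* Borel measurability of an (option X)-valued function of w *)
Definition meas_opt (g : Omega -> option X) :=
  measurable [set w | g w = None] /\
  forall U : set X, open U -> measurable [set w | exists y, g w = Some y /\ U y].

Definition meas_nat (n : Omega -> nat) := forall k, measurable [set w | n w = k].

Definition random_map (N1 L1 N2 L2 : Omega -> set X) (tau : Omega -> Omega)
    (f : Omega -> option X -> option X) :=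
  (forall w, qcont (N1 w) (L1 w) (N2 (tau w)) (L2 (tau w)) (f w)) /\
  (forall x, meas_opt (fun w => f w (qproj (N1 w) (L1 w) x))).

Definition rhomotopic (P : probability Omega R) (N1 L1 N2 L2 : Omega -> set X)
    (tau : Omega -> Omega) (f g : Omega -> option X -> option X) :=
  exists H : R -> Omega -> option X -> option X,
  [/\ (forall t w, 0 <= t <= 1 ->
         H t w None = None /\
         forall q, Qs (N1 w) (L1 w) q -> Qs (N2 (tau w)) (L2 (tau w)) (H t w q)),
      (* joint continuity in (t, q) on [0,1] x N1/L1 *)
      (forall w U, qopen (N2 (tau w)) (L2 (tau w)) U ->
         forall t q, 0 <= t <= 1 -> Qs (N1 w) (L1 w) q -> U (H t w q) ->
         exists e : R, 0 < e /\ exists V, [/\ qopen (N1 w) (L1 w) V, V q &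
           forall t' q', 0 <= t' <= 1 -> `|t' - t| < e -> V q' -> U (H t' w q')]),
      (forall t x, 0 <= t <= 1 -> meas_opt (fun w => H t w (qproj (N1 w) (L1 w) x))) &
      {ae P, forall w, forall q, Qs (N1 w) (L1 w) q ->
                H 0 w q = f w q /\ H 1 w q = g w q}].

Section ShiftEquivalence.
Variables (P : probability Omega R) (theta : Omega -> Omega).

Fixpoint citer (c : Omega -> option X -> option X) (k : nat) (w : Omega) (q : option X)
  : option X :=
  match k with
  | 0 => q
  | k'.+1 => c (iter k' theta w) (citer c k' w q)
  end.

Let th := thetaN theta.

Definition shift_compat (N1 L1 N2 L2 : Omega -> set X) (c d r : Omega -> option X -> option X)
    (n1 : Omega -> nat) :=
  rhomotopic P N1 L1 N2 L2
    (fun w => if (n1 w <= n1 (theta w))%N then th (n1 (theta w)).+1 w else th (n1 w).+1 w)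
    (fun w q => if (n1 w <= n1 (theta w))%N then r (theta w) (c w q)
                else citer d (n1 w - n1 (theta w))%N (th (n1 (theta w)).+1 w)
                       (r (theta w) (c w q)))
    (fun w q => if (n1 w <= n1 (theta w))%N then
                  citer d (n1 (theta w) - n1 w)%N (th (n1 w).+1 w)
                    (d (th (n1 w) w) (r w q))
                else d (th (n1 w) w) (r w q)).

Definition shift_equiv (N1 L1 : Omega -> set X) (c : Omega -> option X -> option X)
    (N2 L2 : Omega -> set X) (d : Omega -> option X -> option X) :=
  exists (n1 n2 : Omega -> nat) (r s : Omega -> option X -> option X),
  [/\ meas_nat n1, meas_nat n2,
      random_map N1 L1 N2 L2 (fun w => th (n1 w) w) r &
      random_map N2 L2 N1 L1 (fun w => th (n2 w) w) s] /\
  [/\ shift_compat N1 L1 N2 L2 c d r n1,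
      shift_compat N2 L2 N1 L1 d c s n2,
      rhomotopic P N2 L2 N2 L2 (fun w => th (n2 w + n1 (th (n2 w) w))%N w)
        (fun w q => r (th (n2 w) w) (s w q))
        (fun w q => citer d (n2 w + n1 (th (n2 w) w))%N w q) &
      rhomotopic P N1 L1 N1 L1 (fun w => th (n1 w + n2 (th (n1 w) w))%N w)
        (fun w q => s (th (n1 w) w) (r w q))
        (fun w q => citer c (n1 w + n2 (th (n1 w) w))%N w q)].

End ShiftEquivalence.

Definition phiP (theta : Omega -> Omega) (phi : Omega -> X -> X) (N L : Omega -> set X)
    (w : Omega) (q : option X) : option X :=
  match q with
  | None => None
  | Some x => if phi w x \in N (theta w) then qproj (N (theta w)) (L (theta w)) (phi w x)
              else None
  end.

(* the trivial index 0: one-point spaces (= empty/empty) with constant maps *)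
Definition empty_rs : Omega -> set X := fun _ => set0.
Definition const_base : Omega -> option X -> option X := fun _ _ => None.

Definition nontrivial_index (P : probability Omega R) (theta thetainv : Omega -> Omega)
    (phi psi : Omega -> X -> X) (S : Omega -> set X) :=
  exists N L : Omega -> set X,
    filtration_pair theta thetainv phi psi S N L /\
    ~ shift_equiv P theta N L (phiP theta phi N L) empty_rs empty_rs const_base.

End Setting.

(* Main.v *)
Require Import Defs.
From HB Require Import structures.
From mathcomp Require Import all_boot all_order all_algebra.
From mathcomp Require Import all_classical all_reals all_analysis measurable_realfun.
Import Order.TTheory GRing.Theory Num.Theory.
Local Open Scope classical_set_scope.
Local Open Scope ring_scope.
Set Implicit Arguments. Unset Strict Implicit. Unset Printing Implicit Defensive.
From mathcomp Require Import lra.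
Section Toolkit.
Context {R : realType} {X : metricType R}.
Implicit Types (x y z : X) (A C : set X).

Lemma nbhsP x A : nbhs x A <-> exists2 e : R, 0 < e & forall y, mdist x y < e -> A y.
Proof.
rewrite nbhs_ballP; split => [[e /= e0 H]|[e e0 H]].
  by exists e => // y hy; apply: H; rewrite ballEmdist.
by exists e => // y; rewrite ballEmdist; apply: H.
Qed.

Lemma ball_openM (c : X) (r : R) : open (ball c r).
Proof.
rewrite openE; move=> p hp; move: (hp); rewrite ballEmdist /= => hp'.
rewrite /interior; apply/nbhsP; exists (r - mdist c p); first by rewrite subr_gt0.
move=> y hy /=.
rewrite (le_lt_trans (metric_triangle c p y)) //.
by rewrite -ltrBrDl.
Qed.

Lemma contP (f : X -> X) : continuous f -> forall x (e : R), 0 < e ->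
  exists2 h : R, 0 < h & forall y, mdist x y < h -> mdist (f x) (f y) < e.
Proof.
move=> cf x e e0.
have : nbhs (f x) (ball (f x) e) by apply: nbhsx_ballx.
move=> /(cf x) /nbhsP [h h0 H]; exists h => // y /H /=.
by rewrite ballEmdist.
Qed.

Lemma dense_approx D : dense D -> forall x (e : R), 0 < e ->
  exists y, D y /\ mdist x y < e.
Proof.
move=> dD x e e0.
have [|y [bxy Dy]] := dD (ball x e) _ (ball_openM x e).
  by exists x; rewrite ballEmdist /= mdistxx.
by exists y; split => //; move: bxy; rewrite ballEmdist.
Qed.

Lemma closed_approx C x : closed C ->
  (forall e : R, 0 < e -> exists y, C y /\ mdist x y < e) -> C x.
Proof.
move=> cC H; apply: cC => B /nbhsP [e e0 HB].
by have [y [Cy hy]] := H e e0; exists y; split => //; apply: HB.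
Qed.

Lemma cluster_seq A (z : nat -> X) : compact A -> (forall m, A (z m)) ->
  exists2 x, A x & forall (e : R) M, 0 < e -> exists m, (M <= m)%N /\ mdist x (z m) < e.
Proof.
move=> cA Az.
have : (z @ \oo) A by apply: filterS (nbhs_infty_ge 0) => m _; apply: Az.
move=> /(cA _ _) [x [Ax clx]]; exists x => // e M e0.
have F1 : (z @ \oo) (z @` [set m | (M <= m)%N]).
  by apply: filterS (nbhs_infty_ge M) => m Mm; exists m.
have [p [[m Mm <-] hp]] := clx _ _ F1 (nbhsx_ballx x _ e0).
by exists m; split => //; move: hp; rewrite ballEmdist.
Qed.

End Toolkit.
Section Reals.
Context {R : realType}.
Definition epsn (m : nat) : R := (m.+1%:R)^-1.

Lemma epsn_gt0 m : 0 < epsn m.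
Proof. by rewrite /epsn invr_gt0 ltr0n. Qed.

Lemma epsn_small (e : R) : 0 < e -> exists M, epsn M < e.
Proof.
move=> e0; exists (Num.trunc (e^-1)); rewrite /epsn.
rewrite -[X in _ < X](invrK e) ltf_pV2 ?posrE ?invr_gt0 ?ltr0n //.
exact: truncnS_gt.
Qed.

Lemma epsn_mono M m : (M <= m)%N -> epsn m <= epsn M.
Proof.
move=> Mm; rewrite /epsn lef_pV2 ?posrE ?ltr0n // ler_nat; by [].
Qed.
End Reals.

Section Dyn.
Context {R : realType} {d : measure_display} {Omega : measurableType d}
  {X : metricType R}.
Variables (theta thetainv : Omega -> Omega) (phi psi : Omega -> X -> X).

Local Notation phN := (phiN theta phi).

Lemma phiN_add n k w y :
  phN (n + k) w y = phN k (iter n theta w) (phN n w y).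
Proof.
elim: k => [|k IH]; first by rewrite addn0.
by rewrite addnS /= IH addnC iterD.
Qed.

Lemma phiN1 w y : phN 1 w y = phi w y.
Proof. by []. Qed.

Lemma phiN_cont k w : (forall w, continuous (phi w)) -> continuous (phN k w).
Proof.
move=> cphi; elim: k => [|k IH] x /=; first exact: cvg_id.
exact: (continuous_comp (IH x) (cphi _ _)).
Qed.

Lemma phiB_cont k w : (forall w, continuous (psi w)) ->
  continuous (phiB thetainv psi k w).
Proof.
move=> cpsi; elim: k => [|k IH] x /=; first exact: cvg_id.
exact: (continuous_comp (IH x) (cpsi _ _)).
Qed.

Lemma phiZ_cont n w : (forall w, continuous (phi w)) -> (forall w, continuous (psi w)) ->
  continuous (phiZ theta thetainv phi psi n w).
Proof.
by move=> c1 c2; case: n => k /=; [apply: phiN_cont | apply: phiB_cont].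
Qed.

Variable N : Omega -> set X.

Definition Kset n w := [set x | forall k, (k <= n)%N -> N (iter k theta w) (phN k w x)].
Definition Gset n := [set w | Kset n w !=set0].

Lemma Gset_decr n : Gset n.+1 `<=` Gset n.
Proof. by move=> w [x Hx]; exists x => k kn; apply: Hx; apply: leqW. Qed.

Lemma Gset_decr' n m : (n <= m)%N -> Gset m `<=` Gset n.
Proof.
move=> nm w [x Hx]; exists x => k kn; apply: Hx; exact: leq_trans kn nm.
Qed.

Lemma Gset_shift n w : Gset n.+1 w -> Gset n (theta w).
Proof.
move=> [x Hx]; exists (phi w x) => k kn.
have := Hx k.+1 kn; rewrite -addn1 addnC phiN_add /= -iterSr.
by [].
Qed.

End Dyn.
Section MeasGen.
Context {d : measure_display} {Omega : measurableType d}.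

Lemma meas_bigcup_ctbl {T : Type} (I : set T) (F : T -> set Omega) :
  countable I -> (forall i, I i -> measurable (F i)) ->
  measurable (\bigcup_(i in I) F i).
Proof.
move=> /countable_injP [f injf] mF.
have -> : \bigcup_(i in I) F i =
    \bigcup_(n in [set: nat]) [set w | exists i, [/\ I i, f i = n & F i w]].
  apply/seteqP; split => w.
    by move=> [i Ii Fw]; exists (f i) => //; exists i.
  by move=> [n _ [i [Ii _ Fw]]]; exists i.
apply: bigcup_measurable => n _.
have [[i [Ii fi]]|nex] := pselect (exists i, I i /\ f i = n).
  have -> : [set w | exists i, [/\ I i, f i = n & F i w]] = F i.
    apply/seteqP; split => w.
      move=> [j [Ij fj Fj]].
      have ji : j = i by apply: injf; rewrite ?inE //; rewrite fi fj.
      by rewrite -ji.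
    by move=> Fw; exists i.
  exact: mF.
have -> : [set w | exists i, [/\ I i, f i = n & F i w]] = set0.
  by apply/seteqP; split => w // [j [Ij fj _]]; apply: nex; exists j.
exact: measurable0.
Qed.

Lemma meas_bigcap_ctbl {T : Type} (I : set T) (F : T -> set Omega) :
  countable I -> (forall i, I i -> measurable (F i)) ->
  measurable (\bigcap_(i in I) F i).
Proof.
move=> cI mF; rewrite -[X in measurable X]setCK setC_bigcap.
by apply: measurableC; apply: meas_bigcup_ctbl => // i Ii; apply: measurableC; apply: mF.
Qed.

Lemma pre_meas (f : Omega -> Omega) (A : set Omega) :
  measurable_fun setT f -> measurable A -> measurable (f @^-1` A).
Proof. by move=> mf mA; have := mf measurableT A mA; rewrite setTI. Qed.

Lemma iter_meas (f : Omega -> Omega) k :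
  measurable_fun setT f -> measurable_fun setT (iter k f).
Proof.
move=> mf; elim: k => [|k IH]; first exact: measurable_id.
exact: (measurableT_comp mf IH).
Qed.

End MeasGen.

Section DistX.
Context {R : realType} {X : metricType R}.

Lemma distX_lt (x : X) (A : set X) (r : R) :
  (distX x A < r%:E)%E <-> exists y, A y /\ mdist x y < r.
Proof.
rewrite /distX; split.
  by move=> /ereal_inf_ltP [_ [y Ay <-]]; rewrite lte_fin => h; exists y.
move=> [y [Ay h]]; apply/ereal_inf_ltP; exists (mdist x y)%:E.
  by exists y.
by rewrite lte_fin.
Qed.
End DistX.
Section Meas.
Context {R : realType} {d : measure_display} {Omega : measurableType d} {X : metricType R}.
Variables (theta : Omega -> Omega) (phi : Omega -> X -> X) (N : Omega -> set X) (D : set X).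
Hypotheses (mtheta : measurable_fun setT theta)
  (cphi : forall w, continuous (phi w))
  (mphi : forall x (U : set X), open U -> measurable [set w | U (phi w x)])
  (cD : countable D) (dD : dense D)
  (mN : forall x, measurable_fun setT (fun w => distX x (N w)))
  (cN : forall w, compact (N w)).

Definition bmeas (u : Omega -> X) :=
  forall (c : X) (r : R), measurable [set w | mdist c (u w) < r].

Lemma bmeas_phi k x : bmeas (fun w => phi (iter k theta w) x).
Proof.
move=> c r.
have -> : [set w | mdist c (phi (iter k theta w) x) < r] =
    iter k theta @^-1` [set w | ball c r (phi w x)].
  by apply/seteqP; split => w /=; rewrite ballEmdist.
apply: pre_meas; first exact: iter_meas.
apply: mphi; exact: ball_openM.
Qed.

Lemma bmeas_comp k (v : Omega -> X) : bmeas v ->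
  bmeas (fun w => phi (iter k theta w) (v w)).
Proof.
move=> mv c r.
pose F := fun (j m : nat) (z : X) => [set w | mdist z (v w) < epsn m] `&`
   \bigcap_(x in [set x | D x /\ mdist z x < epsn m])
      [set w | mdist c (phi (iter k theta w) x) < r - epsn j].
have -> : [set w | mdist c (phi (iter k theta w) (v w)) < r] =
   \bigcup_(j in [set: nat]) \bigcup_(m in [set: nat]) \bigcup_(z in D) F j m z.
  apply/seteqP; split => w /=.
  - move=> h.
    set p := v w; set w' := iter k theta w.
    have [j hj] : exists j, epsn j < (r - mdist c (phi w' p)) / 2.
      by apply: epsn_small; rewrite divr_gt0 // subr_gt0.
    have [eta eta0 Heta] := contP (@cphi w') p (epsn_gt0 j).
    have [m hm] : exists m, epsn m < eta / 2 by apply: epsn_small; rewrite divr_gt0.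
    have [z [Dz hz]] := dense_approx dD p (epsn_gt0 m).
    exists j => //; exists m => //; exists z => //; split; first by rewrite /= metric_sym.
    move=> x [Dx hx] /=.
    have px : mdist p x < eta.
      rewrite (le_lt_trans (metric_triangle p z x)) //.
      have e2 := splitr eta; lra.
    have hphi := Heta x px.
    rewrite (le_lt_trans (metric_triangle c (phi w' p) (phi w' x))) //.
    lra.
  - move=> [j _ [m _ [z Dz [hz hall]]]] /=.
    set p := v w; set w' := iter k theta w.
    have [eta eta0 Heta] := contP (@cphi w') p (epsn_gt0 j).
    have hpos : 0 < Num.min eta (epsn m - mdist z p).
      by rewrite lt_min eta0 subr_gt0.
    have [x [Dx hx]] := dense_approx dD p hpos.
    move: hx; rewrite lt_min => /andP [hx1 hx2].
    have zx : mdist z x < epsn m.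
      rewrite (le_lt_trans (metric_triangle z p x)) //; lra.
    have h1 : mdist c (phi w' x) < r - epsn j by apply: (hall x).
    have h2 := Heta x hx1.
    rewrite (le_lt_trans (metric_triangle c (phi w' x) (phi w' p))) //.
    rewrite (metric_sym (phi w' x)); lra.
apply: bigcup_measurable => j _; apply: bigcup_measurable => m _.
apply: meas_bigcup_ctbl => // z Dz.
apply: measurableI; first exact: mv.
apply: meas_bigcap_ctbl.
  by apply: sub_countable cD; apply: subset_card_le => x [].
by move=> x _; exact: bmeas_phi.
Qed.

Lemma bmeas_phiN k y : bmeas (fun w => phiN theta phi k w y).
Proof.
elim: k => [|k IH] /=.
  move=> c r; case: (boolP (mdist c y < r)) => h.
    by have -> : [set _ : Omega | true] = setT by apply/seteqP; split.
  have -> : [set _ : Omega | false] = set0 by apply/seteqP; split.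
  exact: measurable0.
exact: (bmeas_comp k IH).
Qed.

Lemma dist_meas k (u : Omega -> X) (r : R) : bmeas u ->
  measurable [set w | (distX (u w) (N (iter k theta w)) < r%:E)%E].
Proof.
move=> mu.
have -> : [set w | (distX (u w) (N (iter k theta w)) < r%:E)%E] =
  \bigcup_(m in [set: nat]) \bigcup_(z in D)
     ([set w | mdist z (u w) < epsn m] `&`
      [set w | (distX z (N (iter k theta w)) < (r - epsn m)%:E)%E]).
  apply/seteqP; split => w /=.
  - move=> /distX_lt [y [Ny hy]].
    have [m hm] : exists m, epsn m < (r - mdist (u w) y) / 2.
      by apply: epsn_small; rewrite divr_gt0 // subr_gt0.
    have [z [Dz hz]] := dense_approx dD (u w) (epsn_gt0 m).
    exists m => //; exists z => //; split; first by rewrite /= metric_sym.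
    apply/distX_lt; exists y; split => //.
    rewrite (le_lt_trans (metric_triangle z (u w) y)) //.
    rewrite metric_sym; lra.
  - move=> [m _ [z Dz [hz /distX_lt [y [Ny hy]]]]].
    apply/distX_lt; exists y; split => //.
    rewrite (le_lt_trans (metric_triangle (u w) z y)) //.
    rewrite (metric_sym (u w) z); move: hz => /= hz; lra.
apply: bigcup_measurable => m _; apply: meas_bigcup_ctbl => // z Dz.
apply: measurableI; first exact: mu.
have -> : [set w | (distX z (N (iter k theta w)) < (r - epsn m)%:E)%E] =
  iter k theta @^-1` ((fun w => distX z (N w)) @^-1` `]-oo, (r - epsn m)%:E[).
  by apply/seteqP; split => w /=; rewrite in_itv.
apply: pre_meas; first exact: iter_meas.
have := mN z measurableT (emeasurable_itv `]-oo, (r - epsn m)%:E[).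
by rewrite setTI.
Qed.


Lemma finite_cont (f : nat -> X -> X) : (forall k, continuous (f k)) ->
  forall x (e : R) n, 0 < e -> exists2 h : R, 0 < h &
    forall k y, (k <= n)%N -> mdist x y < h -> mdist (f k x) (f k y) < e.
Proof.
move=> cf x e n e0; elim: n => [|n [h1 h10 H1]].
  have [h h0 H] := contP (@cf 0%N) x e0.
  by exists h => // k y; rewrite leqn0 => /eqP -> /H.
have [h2 h20 H2] := contP (@cf n.+1) x e0.
exists (Num.min h1 h2); first by rewrite lt_min h10 h20.
move=> k y; rewrite leq_eqVlt ltnS => /orP [/eqP -> | kn]; rewrite lt_min => /andP [y1 y2].
  exact: H2.
exact: H1.
Qed.

Lemma Gset_char n : Gset theta phi N n =
  \bigcap_(m in [set: nat]) \bigcup_(y in D) \bigcap_(k in [set k | (k <= n)%N])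
     [set w | (distX (phiN theta phi k w y) (N (iter k theta w)) < (epsn m)%:E)%E].
Proof.
apply/seteqP; split => w.
- move=> [x Kx] m _.
  have [h h0 H] := finite_cont (f := fun k => phiN theta phi k w) (fun k => phiN_cont (k:=k) (w:=w) cphi) x n (epsn_gt0 m).
  have [y [Dy hy]] := dense_approx dD x h0.
  exists y => // k /= kn; apply/distX_lt; exists (phiN theta phi k w x); split.
    exact: Kx.
  by rewrite metric_sym; apply: H.
- move=> H.
  have H' : forall m, exists y, D y /\ forall k, (k <= n)%N ->
      (distX (phiN theta phi k w y) (N (iter k theta w)) < (epsn m)%:E)%E.
    by move=> m; have [y Dy Hy] := H m I; exists y; split => // k kn; apply: Hy.
  have [yf Hyf] := choice H'.
  have H0 : forall m, exists z, N w z /\ mdist (yf m) z < epsn m.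
    by move=> m; have [_ /(_ 0%N (leq0n n))/distX_lt] := Hyf m.
  have [zf Hzf] := choice H0.
  have [x Nx clx] := cluster_seq (@cN w) (fun m => (Hzf m).1).
  exists x => k kn.
  apply: (closed_approx (compact_closed (@metric_hausdorff R X) (@cN _))) => e e0.
  have e20 : 0 < e / 2 by rewrite divr_gt0.
  have [eta eta0 Heta] := contP (f := phiN theta phi k w) (phiN_cont (k:=k) (w:=w) cphi) x e20.
  have eta20 : 0 < eta / 2 by rewrite divr_gt0.
  have [M1 hM1] := epsn_small eta20.
  have [M2 hM2] := epsn_small e20.
  have [m [Mm hm]] := clx (eta / 2) (maxn M1 M2) eta20.
  have em1 : (epsn m : R) <= epsn M1 by apply: epsn_mono; exact: leq_trans (leq_maxl _ _) Mm.
  have em2 : (epsn m : R) <= epsn M2 by apply: epsn_mono; exact: leq_trans (leq_maxr _ _) Mm.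
  have hzy := (Hzf m).2.
  have xy : mdist x (yf m) < eta.
    rewrite (le_lt_trans (metric_triangle x (zf m) (yf m))) //.
    rewrite (metric_sym (zf m)); have := splitr eta; lra.
  have h1 := Heta _ xy.
  have [p [Np hp]] := (distX_lt _ _ _).1 ((Hyf m).2 k kn).
  exists p; split => //.
  rewrite (le_lt_trans (metric_triangle _ (phiN theta phi k w (yf m)) p)) //.
  have := splitr e; lra.
Qed.

Lemma Gset_meas n : measurable (Gset theta phi N n).
Proof.
rewrite Gset_char; apply: bigcap_measurableType => m _.
apply: meas_bigcup_ctbl => // y Dy.
apply: bigcap_measurableType => k _.
apply: dist_meas; exact: bmeas_phiN.
Qed.

End Meas.
Section Ergo.
Context {R : realType} {d : measure_display} {Omega : measurableType d}.
Variables (P : probability Omega R) (theta : Omega -> Omega).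
Hypotheses (mtheta : measurable_fun setT theta)
  (pres : forall A, measurable A -> P (theta @^-1` A) = P A).

Lemma iter_pres k A : measurable A -> P (iter k theta @^-1` A) = P A.
Proof.
elim: k A => [|k IH] A mA //.
have -> : iter k.+1 theta @^-1` A = iter k theta @^-1` (theta @^-1` A) by [].
by rewrite IH ?pres //; apply: pre_meas.
Qed.

Variable E : set Omega.
Hypotheses (erg : ergodic P theta) (mE : measurable E) (Einv : E `<=` theta @^-1` E).

Lemma E_iter k : E `<=` iter k theta @^-1` E.
Proof. by elim: k => [|k IH] w Ew //=; apply: Einv; apply: IH. Qed.

Lemma ergo_dich : P E = 0%E \/ P (~` E) = 0%E.
Proof.
pose Einf := \bigcup_(k in [set: nat]) (iter k theta @^-1` E).
have mEinf : measurable Einf.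
  by apply: bigcup_measurable => k _; apply: pre_meas => //; apply: iter_meas.
have inv : theta @^-1` Einf = Einf.
  apply/seteqP; split => w.
    by move=> [k _ /= h]; exists k.+1 => //; move: h; rewrite -iterSr.
  move=> [[|k] _ h].
    by exists 0%N => //=; apply: Einv.
  by exists k => //=; rewrite -iterSr.
have EEinf : E `<=` Einf by move=> w Ew; exists 0%N.
case: (erg mEinf inv) => h.
  left; apply/eqP; rewrite -measure_le0 -h le_measure ?inE //.
right; apply: (measure_negligible (measurableC mE)).
apply: (@negligibleS _ _ _ _ (~` Einf `|` \bigcup_k (iter k theta @^-1` E `\` E))).
  move=> w nEw; case: (pselect (Einf w)) => hw; last by left.
  by right; case: hw => k _ hk; exists k.
apply: negligibleU.
  apply/negligibleP; first exact: measurableC.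
  by apply: (eq_trans (probability_setC P mEinf)); rewrite h subee.
apply: negligible_bigcup => k.
have mA : measurable (iter k theta @^-1` E) by apply: pre_meas => //; apply: iter_meas.
apply/negligibleP; first exact: measurableD.
rewrite measureD //; last by rewrite (le_lt_trans (probability_le1 _ mA)) // ltry.
have -> : iter k theta @^-1` E `&` E = E.
  by apply/seteqP; split => [w []//|w Ew]; split => //; apply: E_iter.
change (P (iter k theta @^-1` E) - P E = 0)%E.
rewrite iter_pres // subee // ge0_fin_numE ?measure_ge0 //.
by rewrite (le_lt_trans (probability_le1 _ mE)) // ltry.
Qed.
End Ergo.
Section Index.
Context {R : realType} {d : measure_display} {Omega : measurableType d} {X : metricType R}.
Variables (P : probability Omega R) (theta : Omega -> Omega) (phi : Omega -> X -> X)
  (N L : Omega -> set X).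

Local Notation G := (Gset theta phi N).
Local Notation c := (phiP theta phi N L).

Lemma qproj_Some (A B : set X) x y : qproj A B x = Some y -> y = x.
Proof. by rewrite /qproj; case: ifP => // _ [->]. Qed.

Lemma citer_Some k w q y : citer theta c k w q = Some y -> Qs (N w) (L w) q ->
  exists x, [/\ q = Some x, Kset theta phi N k w x & y = phiN theta phi k w x].
Proof.
elim: k y => [|k IH] y /=.
  move=> -> [//|[x [[->] Nx _]]]; exists x; split => //.
  by move=> j; rewrite leqn0 => /eqP ->.
case E : (citer theta c k w q) => [y'|] //= h Qq.
have [x [qx Kx yx]] := IH y' E Qq.
move: h; case: ifP => // /set_mem Nphi /qproj_Some ->.
exists x; split => //; last by rewrite yx.
move=> j; rewrite leq_eqVlt ltnS => /orP [/eqP -> /= | jk]; last exact: Kx.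
by rewrite -yx.
Qed.

Lemma citer_None k w q : ~ G k w -> Qs (N w) (L w) q -> citer theta c k w q = None.
Proof.
move=> nG Qq; case E : (citer theta c k w q) => [y|] //.
by have [x [_ Kx _]] := citer_Some E Qq; exfalso; apply: nG; exists x.
Qed.

Lemma citer_const_None k w : citer theta (@const_base _ _ Omega X) k w None = None.
Proof. by elim: k. Qed.

Definition n1f (w : Omega) : nat :=
  match pselect (exists n, ~~ `[< G n w >]) with
  | left h => @ex_minn (fun n => ~~ `[< G n w >]) h
  | right _ => 0%N
  end.

Lemma n1f_spec w : (exists n, ~ G n w) ->
  ~ G (n1f w) w /\ forall n, ~ G n w -> (n1f w <= n)%N.
Proof.
move=> [n0 hn0]; rewrite /n1f; case: pselect => [h|nh]; last first.
  by exfalso; apply: nh; exists n0; apply/negP => /asboolP.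
case: ex_minnP => m Pm minm; split.
  by move: Pm => /negP hm hG; apply: hm; apply/asboolP.
by move=> n hn; apply: minm; apply/negP => /asboolP.
Qed.

Lemma n1f_E w : (forall n, G n w) -> n1f w = 0%N.
Proof.
move=> hG; rewrite /n1f; case: pselect => // [[n hn]].
by exfalso; move: hn => /negP; apply; apply/asboolP.
Qed.

Hypothesis mG : forall n, measurable (G n).

Lemma n1f_meas : meas_nat n1f.
Proof.
move=> k.
have Gdec : forall m n, (m <= n)%N -> G n `<=` G m.
  by move=> m n mn; apply: Gset_decr'.
case: k => [|k].
  have -> : [set w | n1f w = 0%N] = ~` G 0 `|` \bigcap_n G n.
    apply/seteqP; split => w.
      move=> h; case: (pselect (forall n, G n w)) => hall; first by right.
      left; have /existsNP ex := hall.
      by have [h0 _] := n1f_spec ex; rewrite h in h0.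
    move=> [nG0|hall]; last by apply: n1f_E => n; apply: hall.
    have [_ mn] := n1f_spec (ex_intro _ 0%N nG0).
    by apply/eqP; rewrite -leqn0; apply: mn.
  apply: measurableU; first exact: measurableC.
  exact: bigcap_measurableType.
have -> : [set w | n1f w = k.+1] = G k `\` G k.+1.
  apply/seteqP; split => w.
    move=> h.
    have ex : exists n, ~ G n w.
      apply: contrapT => /forallNP hall.
      have : n1f w = 0%N by apply: n1f_E => n; apply: contrapT; apply: hall.
      by rewrite h.
    have [nG mn] := n1f_spec ex; rewrite h in nG; split => //.
    apply: contrapT => nGk.
    by have := mn _ nGk; rewrite h ltnn.
  move=> [Gk nGk1].
  have [nG mn] := n1f_spec (ex_intro _ k.+1 nGk1).
  have le1 := mn _ nGk1.
  apply/eqP; rewrite eqn_leq le1 /=.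
  rewrite ltnNge; apply/negP => lek.
  by apply: nG; apply: (Gdec _ _ lek).
exact: measurableD.
Qed.

End Index.
Section Trivial.
Context {R : realType} {d : measure_display} {Omega : measurableType d} {X : metricType R}.
Variables (P : probability Omega R).

Lemma Qs_qproj (A B : set X) x : Qs A B (qproj A B x).
Proof.
rewrite /qproj; case: ifP => [/andP [/set_mem Ax /negP Bx]|_]; last by left.
by right; exists x; split => // hB; apply: Bx; apply/mem_set.
Qed.

Lemma qopen_const (A B : set X) (b : Prop) : qopen A B (Qs A B `&` [set _ | b]).
Proof.
split; first by move=> q [].
case: (pselect b) => hb.
  exists setT; split; first exact: openT.
  apply/seteqP; split => x /=; first by move=> [Ax _].
  by move=> [_ Ax]; split => //; split => //; apply: Qs_qproj.
exists set0; split; first exact: open0.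
by apply/seteqP; split => x /=; [move=> [_ [_ hb']]|move=> [[]]].
Qed.

Lemma qopen_Qs (A B : set X) : qopen A B (Qs A B).
Proof.
have := qopen_const A B True.
by have -> : Qs A B `&` [set _ | True] = Qs A B by apply/seteqP; split => q // [].
Qed.

Lemma meas_opt_None : meas_opt (fun _ : Omega => @None X).
Proof.
split.
  by have -> : [set w : Omega | @None X = None] = setT by apply/seteqP; split.
move=> U _.
have -> : [set w : Omega | exists y, @None X = Some y /\ U y] = set0.
  by apply/seteqP; split => w // [y []].
exact: measurable0.
Qed.

Lemma random_map_const (N1 L1 N2 L2 : Omega -> set X) tau :
  random_map N1 L1 N2 L2 tau (@const_base R d Omega X).
Proof.
split => [w|x]; last exact: meas_opt_None.
split => //; first by move=> q _; left.
by move=> U _; exact: (qopen_const _ _ (U None)).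
Qed.

Lemma rhom_None (N1 L1 N2 L2 : Omega -> set X) tau f g :
  {ae P, forall w, forall q, Qs (N1 w) (L1 w) q -> f w q = None /\ g w q = None} ->
  rhomotopic P N1 L1 N2 L2 tau f g.
Proof.
move=> hae; exists (fun _ _ _ => None); split.
- by move=> t w _; split => // q _; left.
- move=> w U _ t q _ Qq Un; exists 1; split => //.
  by exists (Qs (N1 w) (L1 w)); split => //; exact: qopen_Qs.
- by move=> t x _; exact: meas_opt_None.
- by apply: filterS hae => w hw q Qq; have [-> ->] := hw q Qq.
Qed.

Lemma meas_nat0 : meas_nat (fun _ : Omega => 0%N).
Proof.
move=> [|k].
  by have -> : [set w : Omega | 0%N = 0%N] = setT by apply/seteqP; split.
by have -> : [set w : Omega | 0%N = k.+1] = set0 by apply/seteqP; split.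
Qed.

Lemma ae_all (Q : Omega -> Prop) : (forall w, Q w) -> {ae P, forall w, Q w}.
Proof. by move=> h; apply: (negligibleS _ (negligible_set0 P)) => w /= nq; apply: nq; apply: h. Qed.

End Trivial.
Section ShiftTriv.
Context {R : realType} {d : measure_display} {Omega : measurableType d} {X : metricType R}.
Variables (P : probability Omega R) (theta : Omega -> Omega) (phi : Omega -> X -> X)
  (N L : Omega -> set X).
Hypothesis mG : forall n, measurable (Gset theta phi N n).
Hypothesis hE : P.-negligible (\bigcap_n Gset theta phi N n).

Lemma shift_equiv_triv :
  shift_equiv P theta N L (phiP theta phi N L) empty_rs empty_rs const_base.
Proof.
exists (n1f theta phi N), (fun _ => 0%N), (@const_base R d Omega X), (@const_base R d Omega X); split; split.
- exact: n1f_meas.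
- exact: meas_nat0.
- exact: random_map_const.
- exact: random_map_const.
- apply: rhom_None; apply: ae_all => w q _.
  by case: ifP => _ /=; rewrite ?citer_const_None.
- apply: rhom_None; apply: ae_all => w q _.
  by [].
- apply: rhom_None; apply: ae_all => w q [->|[x [_ hx _]]] //.
  by rewrite citer_const_None.
- apply: rhom_None.
  apply: (negligibleS _ hE) => w /= nQ n _.
  apply: contrapT => nG; apply: nQ => q Qq; split => //.
  rewrite addn0; apply: citer_None => //.
  exact: (n1f_spec (ex_intro _ n nG)).1.
Qed.
End ShiftTriv.
Section Back.
Context {R : realType} {d : measure_display} {Omega : measurableType d} {X : metricType R}.
Variables (theta thetainv : Omega -> Omega) (phi psi : Omega -> X -> X) (N : Omega -> set X).
Hypotheses (tK : cancel theta thetainv) (tiK : cancel thetainv theta)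
  (pK : forall w, cancel (phi w) (psi w))
  (cphi : forall w, continuous (phi w)) (cpsi : forall w, continuous (psi w))
  (cN : forall w, compact (N w)).

Lemma iter_cancel n w : iter n theta (iter n thetainv w) = w.
Proof. by elim: n => //= n IH; rewrite -iterS iterSr tiK IH. Qed.

Lemma phiB_back a m w0 y :
  phiB thetainv psi a (iter (m + a) theta w0) (phiN theta phi (m + a) w0 y) =
    phiN theta phi m w0 y /\
  iter a thetainv (iter (m + a) theta w0) = iter m theta w0.
Proof.
elim: a m => [|a IH] m; first by rewrite addn0.
have [h1 h2] := IH m.+1; rewrite addSnnS in h1 h2.
split; last by rewrite /= h2 /= tK.
by rewrite /= h1 h2 /= tK pK.
Qed.

Lemma Inv_nonempty w : (forall n, Gset theta phi N (n + n)%N (iter n thetainv w)) ->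
  Defs.Inv theta thetainv phi psi N w !=set0.
Proof.
move=> hG.
have [yf Hy] := choice hG.
pose xf n := phiN theta phi n (iter n thetainv w) (yf n).
have fwd : forall n k, (k <= n)%N -> N (iter k theta w) (phiN theta phi k w (xf n)).
  move=> n k kn.
  have nk : (n + k <= n + n)%N by rewrite leq_add2l.
  have := Hy n (n + k)%N nk.
  by rewrite phiN_add iter_cancel addnC iterD iter_cancel.
have bwd : forall n j, (j < n)%N ->
    N (iter j.+1 thetainv w) (phiB thetainv psi j.+1 w (xf n)).
  move=> n j jn.
  have nE : n = ((n - j.+1) + j.+1)%N by rewrite subnK.
  have [h1 h2] := phiB_back j.+1 (n - j.+1) (iter n thetainv w) (yf n).
  rewrite -nE iter_cancel in h1 h2.
  rewrite /xf h1 h2; apply: Hy.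
  by rewrite (leq_trans (leq_subr _ _) (leq_addr _ _)).
have [x Nx clx] := cluster_seq (@cN w) (fun n => fwd n 0%N (leq0n n)).
exists x; split => // n.
have [M hM] : exists M, forall m, (M <= m)%N ->
    N (thetaZ theta thetainv n w) (phiZ theta thetainv phi psi n w (xf m)).
  case: n => [k|j]; first by exists k => m km; apply: fwd.
  by exists j.+1 => m jm; apply: bwd.
apply: (closed_approx (compact_closed (@metric_hausdorff R X) (@cN _))) => e e0.
have [eta eta0 Heta] := contP (f := phiZ theta thetainv phi psi n w)
  (phiZ_cont (n := n) (w := w) cphi cpsi) x e0.
have [m [Mm hm]] := clx eta M eta0.
by exists (phiZ theta thetainv phi psi n w (xf m)); split; [apply: hM | apply: Heta].
Qed.
End Back.

Unset Implicit Arguments.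

Theorem mainTheorem11 (R : realType) (d : measure_display) (Omega : measurableType d)
    (P : probability Omega R) (theta thetainv : Omega -> Omega)
    (X : metricType R) (phi psi : Omega -> X -> X) (S : Omega -> set X) :
  invertible_mp P theta thetainv ->
  complete_space X -> locally_compact [set: X] -> separable_space X ->
  random_homeo phi psi ->
  isolated_invariant theta thetainv phi psi S ->
  nontrivial_index P theta thetainv phi psi S ->
  ergodic P theta ->
  {ae P, forall w, S w !=set0}.
Proof.
move=> [tK tiK mth mthi pres] _ _ [D [cD dD]] [mphi hw] _ [N [L [fp nse]]] erg.
have cphi : forall w, continuous (phi w) by move=> w; case: (hw w).
have cpsi : forall w, continuous (psi w) by move=> w; case: (hw w).
have pK : forall w, cancel (phi w) (psi w) by move=> w; case: (hw w).
case: fp => [[[[cN mN] _] SInv _ _ _] _].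
have mG : forall n, measurable (Gset theta phi N n).
  by move=> n; apply: (Gset_meas (D := D)).
pose E := \bigcap_(n in [set: nat]) Gset theta phi N n.
have mE : measurable E by apply: bigcap_measurableType => n _.
have Einv : E `<=` theta @^-1` E.
  by move=> w Ew n _; apply: Gset_shift; apply: Ew.
have presinv : forall A, measurable A -> P (thetainv @^-1` A) = P A.
  move=> A mA.
  have e : theta @^-1` (thetainv @^-1` A) = A.
    by apply/seteqP; split => w /=; rewrite tK.
  by rewrite -{2}e pres //; apply: pre_meas.
case: (ergo_dich mth pres erg mE Einv) => hPE.
  exfalso; apply: nse; apply: shift_equiv_triv => //.
  by apply/negligibleP.
apply: (@negligibleS _ _ _ _ (\bigcup_n (iter n thetainv @^-1` ~` E))).
  move=> w /= nS; apply: contrapT => hw'; apply: nS.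
  rewrite SInv; apply: Inv_nonempty => // n.
  apply: contrapT => nG; apply: hw'; exists n => //= hE.
  by apply: nG; apply: hE.
apply: negligible_bigcup => n.
have mC : measurable (~` E) by apply: measurableC.
apply/negligibleP; first by apply: pre_meas => //; apply: iter_meas.
change (P (iter n thetainv @^-1` ~` E) = 0%E).
by rewrite (iter_pres mthi presinv).
Qed.
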